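(* Let $(X,d)$ be a metric space, $f:X\to X$ a Borel measurable map and $\mu$ a Borel probability measure on $X$. Then $\mu$ is an expansive measure of $f$ (i.e., there is $\delta>0$ with $\mu(\Phi_\delta(x))=0$ for all $x\in X$) if and only if there is $\delta>0$ such that $\mu(\Phi_\delta(x))=0$ for $\mu$-almost every $x\in X$.
   Context: Here $\Phi_\delta(x)=\{y\in X: d(f^i(y),f^i(x))\le\delta \text{ for all } i\in\mathbb{N}\}$, $\mathbb{N}=\{0,1,2,\dots\}$. *)

(* Defs.v *)
From HB Require Import structures.
From mathcomp Require Import all_boot all_order all_algebra.
From mathcomp Require Import all_classical all_reals all_analysis.
Set Implicit Arguments. Unset Strict Implicit. Unset Printing Implicit Defensive.
Import Order.TTheory GRing.Theory Num.Theory.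
Local Open Scope classical_set_scope.
Local Open Scope ring_scope.

Definition is_metric {R : realType} {T : Type} (dist : T -> T -> R) : Prop :=
  [/\ (forall x y, 0 <= dist x y),
      (forall x y, dist x y = 0 <-> x = y),
      (forall x y, dist x y = dist y x) &
      (forall x y z, dist x z <= dist x y + dist y z)].

Definition metric_open {R : realType} {T : Type} (dist : T -> T -> R) (U : set T) : Prop :=
  forall x, U x -> exists2 e : R, 0 < e & [set y | dist x y < e] `<=` U.

Definition Phi {R : realType} {T : Type} (dist : T -> T -> R) (f : T -> T)
  (delta : R) (x : T) : set T :=
  [set y | forall i : nat, dist (iter i f y) (iter i f x) <= delta].

Definition expansive_measure {R : realType} {dT : measure_display}
  {T : measurableType dT} (dist : T -> T -> R) (f : T -> T)
  (mu : {measure set T -> \bar R}) : Prop :=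
  exists2 delta : R, 0 < delta & forall x, mu (Phi dist f delta x) = 0%E.

(* Main.v *)
Require Import Defs.
From HB Require Import structures.
From mathcomp Require Import all_boot all_order all_algebra.
From mathcomp Require Import all_classical all_reals all_analysis.
From mathcomp Require Import lra.
Import Order.TTheory GRing.Theory Num.Theory.
Local Open Scope classical_set_scope.
Local Open Scope ring_scope.

Theorem lemma2p3 (R : realType) (dT : measure_display) (T : measurableType dT)
  (dist : T -> T -> R)
  (hmetric : is_metric dist)
  (hborel : @measurable dT T = <<s metric_open dist >>)
  (f : T -> T) (hf : measurable_fun setT f)
  (mu : probability T R) :
  expansive_measure dist f mu <->
  exists2 delta : R, 0 < delta &
    {ae mu, forall x, mu (Phi dist f delta x) = 0%E}.
Proof.
case: hmetric => d0 dE dC dT3.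
have mball : forall c r, measurable [set y | dist y c <= r].
  move=> c r.
  have mA : measurable [set y | r < dist y c].
    rewrite hborel; apply: sub_gen_smallest => y /= ry.
    exists (dist y c - r); first by rewrite subr_gt0.
    move=> z /= hz.
    have := dT3 y z c => h.
    move: hz h; lra.
  have -> : [set y | dist y c <= r] = ~` [set y | r < dist y c].
    by apply/seteqP; split => y /=; [by move=> h; apply/negP; rewrite -leNgt | by move/negP; rewrite -leNgt].
  exact: measurableC.
have miter : forall i, measurable_fun setT (iter i f).
  elim=> [|i IH] /=; first exact: measurable_id.
  exact: measurableT_comp.
have mPhi : forall r x, measurable (Phi dist f r x).
  move=> r x.
  have -> : Phi dist f r x = \bigcap_i (iter i f @^-1` [set y | dist y (iter i f x) <= r]).
    by apply/seteqP; split => y /= h; [move=> i _; exact: h | move=> i; exact: h].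
  apply: bigcapT_measurable => i.
  by rewrite -[X in measurable X]setTI; apply: miter.
split.
  case=> delta dpos h; exists delta => //.
  by apply: aeW => x; exact: h.
case=> delta dpos [N [mN muN sN]].
exists (delta / 2); first by rewrite divr_gt0.
move=> x; apply/eqP; rewrite eq_le measure_ge0 andbT.
have [[y Py Ny]|] := pselect (exists2 y, Phi dist f (delta / 2) x y & ~ N y).
  have gy : mu (Phi dist f delta y) = 0%E.
    apply: contra_notP Ny => hy; exact: sN.
  rewrite -gy; apply: le_measure; rewrite ?inE //.
  move=> z /= Pz i.
  apply: le_trans (dT3 _ (iter i f x) _) _.
  by rewrite (dC (iter i f x)) [delta](splitr delta) lerD.
move=> hn; rewrite -muN; apply: le_measure; rewrite ?inE //.
move=> z Pz; apply: contrapT => Nz; apply: hn; by exists z.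
Qed.
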